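(* For every dynamic network congestion game $(\mathcal A,n)$ and every vector $\vec\gamma=(\gamma_i)_{i\in[n]}$ of reals, the cost of a shortest path in the graph $\mathcal G^{\vec\gamma}_{NE}$ from $(c_{\mathsf{src}},\infty^n)$ to some vertex of the form $(c_{\mathsf{tgt}},b)$ equals the $\vec\gamma$-weighted social cost of a $\vec\gamma$-minimal Nash equilibrium of $(\mathcal A,n)$.
   Context: An arena is $\mathcal A=(V,E,\mathsf{src},\mathsf{tgt})$ with $V$ finite and $E$ a partial function from $V\times V$ to non-decreasing piecewise-affine functions $\mathbb N\to\mathbb N$ (edge $e$ has cost function $\ell_e$); $\mathsf{tgt}$ has only a self-loop of constant cost $0$ and is reachable from every state. In the dynamic NCG $(\mathcal A,n)$ with players $[n]$, configurations are maps $c:[n]\to V$; $c_{\mathsf{src}}$, $c_{\mathsf{tgt}}$ map everyone to $\mathsf{src}$, resp. $\mathsf{tgt}$. From $c$, a move vector $(e_i)_i$ ($e_i$ an edge leaving $c(i)$) yields the transition $(c,w,c')$ where $c'(i)$ is the target of $e_i$ and $w(i)=\ell_{e_i}(u_i)$, $u_i$ being the number of $j$ with $e_j=e_i$; write $c\Rightarrow c'$ and $\mathrm{cost}_i(c,c')=w(i)$. Let $C=V^{[n]}$ and $T$ the set of these transitions. Strategies map finite histories from $c_{\mathsf{src}}$ to edges leaving the player's current position; $\mathrm{cost}_i(\sigma)$ is player $i$'s total payment along the outcome of profile $\sigma$ until reaching $\mathsf{tgt}$; a Nash equilibrium is a profile in which no player can lower their cost by a unilateral change. The $\vec\gamma$-weighted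 social cost of $\sigma$ is $\sum_k\gamma_k\mathrm{cost}_k(\sigma)$, and a $\vec\gamma$-minimal Nash equilibrium is one with the least $\vec\gamma$-weighted social cost among Nash equilibria. Let $\mathrm{dev}_i(c,c')=\{c''\mid c\Rightarrow c'',\ c''(j)=c'(j)\ \forall j\ne i\}$ and $\mathrm{val}_{i,c}=\sup_{\sigma_{-i}}\inf_{\sigma_i}\mathrm{cost}_i((\sigma_{-i},\sigma_i),c)$ (game started from $c$). Let $\kappa=\max_{e\in E}\ell_e(n)$ and $Y=|V|\cdot\kappa$. The weighted graph $\mathcal G^{\vec\gamma}_{NE}$ has vertex set $C\times(\{1,\dots,Y\}\cup\{0,\infty\})^n$ and an edge $((c,b),z,(c',b'))$ iff there is $(c,w,c')\in T$ with $z=\vec\gamma\cdot w$ and, for all $i\in[n]$, $b'_i=\min\big(b_i-w_i,\ \min_{c''\in\mathrm{dev}_i(c,c')}\mathrm{cost}_i(c,c'')+\mathrm{val}_{i,c''}-w_i\big)$ (so in particular each $b'_i$ must be nonnegative); the cost of a path is the sum of its edge weights $z$. *)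

(* Defs.v *)
From HB Require Import structures.
From mathcomp Require Import all_boot all_order all_algebra.
From mathcomp Require Import boolp classical_sets reals constructive_ereal ereal.

Set Implicit Arguments.
Unset Strict Implicit.
Unset Printing Implicit Defensive.
Import Order.TTheory GRing.Theory Num.Theory.

Local Open Scope ring_scope.
Local Open Scope classical_set_scope.

(* A function N -> N is piecewise affine (with finitely many pieces) iff its
   second difference vanishes from some point on. *)
Definition piecewise_affine (f : nat -> nat) : Prop :=
  exists N : nat, forall x : nat, (N <= x)%N -> (f x.+2 + f x = (f x.+1).*2)%N.

Record arena := Arena {
  state : finType;
  edge : state -> state -> option (nat -> nat);
  src : state;
  tgt : state;
  edge_mono : forall u v l, edge u v = Some l -> {homo l : x y / (x <= y)%N};
  edge_pwa : forall u v l, edge u v = Some l -> piecewise_affine l;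
  tgt_only_loop : forall v, isSome (edge tgt v) = (v == tgt);
  tgt_loop_zero : forall l, edge tgt tgt = Some l -> forall x, l x = 0%N;
  tgt_reachable : forall v, connect (fun x y => isSome (edge x y)) v tgt
}.

Section Game.
Variables (A : arena) (n : nat).
Local Notation V := (state A).

Definition config := {ffun 'I_n -> V}.
Definition c_src : config := [ffun => src A].
Definition c_tgt : config := [ffun => tgt A].

Definition lcost (u v : V) (x : nat) : nat :=
  if edge u v is Some l then l x else 0%N.

(* c => c' : every player i moves along the edge (c i, c' i)
   (edges are determined by their endpoints, so c' determines the move vector) *)
Definition step (c c' : config) : bool :=
  [forall i, isSome (edge (c i) (c' i))].

Definition load (c c' : config) (i : 'I_n) : nat :=
  #|[set j | (c j == c i) && (c' j == c' i)]|.

Definition tcost (c c' : config) (i : 'I_n) : nat :=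
  lcost (c i) (c' i) (load c c' i).

Definition dev (i : 'I_n) (c c' : config) : {set config} :=
  [set c'' | step c c'' && [forall j, (j != i) ==> (c'' j == c' j)]].

Definition history := seq config.
Definition strategy := history -> V.
Definition profile := 'I_n -> strategy.

Definition valid_strategy (i : 'I_n) (s : strategy) : Prop :=
  forall (x : config) (h : seq config),
    isSome (edge ((last x h) i) (s (x :: h))).

Definition valid_profile (sigma : profile) : Prop :=
  forall i, valid_strategy i (sigma i).

Definition upd (sigma : profile) (i : 'I_n) (s : strategy) : profile :=
  fun j => if j == i then s else sigma j.

Fixpoint hist (sigma : profile) (c : config) (k : nat) : history :=
  if k is k'.+1 then
    let h := hist sigma c k' in rcons h [ffun i => sigma i h]
  else [:: c].

Definition play (sigma : profile) (c : config) (k : nat) : config :=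
  last c (hist sigma c k).

Variable R : realType.

Definition cost (i : 'I_n) (sigma : profile) (c : config) : \bar R :=
  match pselect (exists k, play sigma c k i == tgt A) with
  | left P =>
      ((\sum_(j < @ex_minn (fun k => play sigma c k i == tgt A) P)
          tcost (play sigma c j) (play sigma c j.+1) i)%N%:R)%:E
  | right _ => +oo%E
  end.

Definition NashEq (sigma : profile) : Prop :=
  valid_profile sigma /\
  forall i s, valid_strategy i s ->
    (cost i sigma c_src <= cost i (upd sigma i s) c_src)%E.

Definition social_cost (gamma : 'I_n -> R) (sigma : profile) : \bar R :=
  (\sum_(k < n) ((gamma k)%:E * cost k sigma c_src))%E.

Definition minimal_NE (gamma : 'I_n -> R) (sigma : profile) : Prop :=
  NashEq sigma /\
  forall sigma', NashEq sigma' ->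
    (social_cost gamma sigma <= social_cost gamma sigma')%E.

Definition val (i : 'I_n) (c : config) : \bar R :=
  ereal_sup [set ereal_inf [set cost i (upd sigma i s) c | s in [set s | valid_strategy i s]]
            | sigma in [set sigma : profile | forall j, j != i -> valid_strategy j (sigma j)]].

Definition kappa : nat := (\max_(u : V) \max_(v : V) lcost u v n)%N.
Definition Ybound : nat := (#|V| * kappa)%N.

Definition inB (x : \bar R) : Prop :=
  x = +oo%E \/ exists k : nat, (k <= Ybound)%N /\ x = (k%:R)%:E.

Definition vertex := (config * ('I_n -> \bar R))%type.

Definition Gedge (gamma : 'I_n -> R) (x : vertex) (z : R) (y : vertex) : Prop :=
  [/\ forall i, inB (x.2 i),
      forall i, inB (y.2 i),
      step x.1 y.1,
      z = \sum_(i < n) gamma i * (tcost x.1 y.1 i)%:R &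
      forall i, y.2 i =
        Order.min (x.2 i - ((tcost x.1 y.1 i)%:R)%:E)%E
          (\big[Order.min/+oo%E]_(c'' in dev i x.1 y.1)
             (((tcost x.1 c'' i)%:R)%:E + val i c'' - ((tcost x.1 y.1 i)%:R)%:E)%E)].

Inductive gpath (gamma : 'I_n -> R) : vertex -> vertex -> R -> Prop :=
| gpath_nil x : gpath gamma x x 0
| gpath_cons x y t z p : Gedge gamma x z y -> gpath gamma y t p -> gpath gamma x t (z + p).

End Game.

(* Main.v *)
Require Import Defs.
From HB Require Import structures.
From mathcomp Require Import all_boot all_order all_algebra.
From mathcomp Require Import boolp classical_sets reals constructive_ereal ereal.
From mathcomp Require Import zify.
Import Order.TTheory GRing.Theory Num.Theory.
Local Open Scope ring_scope.

Set Implicit Arguments.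
Unset Strict Implicit.
Unset Printing Implicit Defensive.

Section Proofs.
Variable R : realType.
Variable A : arena.
Variable n : nat.
Local Notation V := (state A).
Local Notation config := (config A n).
Local Notation profile := (profile A n).
Local Notation strategy := (strategy A n).
Local Notation history := (history A n).
Local Notation tgt := (tgt A).
Implicit Types (sigma : profile) (c : config) (i : 'I_n) (rho : nat -> config).

Lemma in_cset (T : finType) (b : pred T) x : (x \in [set y | b y]%classic) = b x.
Proof. by apply/idP/idP; rewrite inE. Qed.

Definition erel : rel V := fun x y => isSome (edge x y).

Lemma hist_size sigma c k : size (hist sigma c k) = k.+1.
Proof. by elim: k => //= k IH; rewrite size_rcons IH. Qed.

Lemma hist_head sigma c k : exists h, hist sigma c k = c :: h.
Proof.
elim: k => [|k [h IH]] /=; first by exists [::].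
by rewrite IH; exists (rcons h [ffun i => sigma i (c :: h)]).
Qed.

Lemma play_S sigma c k : play sigma c k.+1 = [ffun i => sigma i (hist sigma c k)].
Proof. by rewrite /play /= last_rcons. Qed.

Lemma last_hist sigma c k x : last x (hist sigma c k) = play sigma c k.
Proof. by rewrite /play; have [h ->] := hist_head sigma c k. Qed.

Lemma hist_mkseq sigma c k : hist sigma c k = mkseq (play sigma c) k.+1.
Proof.
elim: k => // k IH.
have -> : hist sigma c k.+1 = rcons (hist sigma c k) (play sigma c k.+1).
  by rewrite play_S.
rewrite IH /mkseq -[k.+2]addn1 iotaD map_cat /= cats1 //.
Qed.

Lemma run_valid sigma c i : valid_strategy i (sigma i) ->
  forall t, erel (play sigma c t i) (play sigma c t.+1 i).
Proof.
move=> Hv t; rewrite play_S ffunE.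
have [h Eh] := hist_head sigma c t.
by have := Hv c h; rewrite -Eh /erel -(last_hist sigma c t c) Eh.
Qed.

Lemma tgt_next v : erel tgt v -> v = tgt.
Proof. by rewrite /erel tgt_only_loop => /eqP. Qed.

Lemma tgt_loop : erel tgt tgt.
Proof. by rewrite /erel tgt_only_loop. Qed.

Lemma lcost_tgt x : lcost tgt tgt x = 0%N.
Proof.
rewrite /lcost; case E: (edge tgt tgt) => [l|] //.
exact: tgt_loop_zero E x.
Qed.

Definition ivalid (rho : nat -> config) i := forall t, erel (rho t i) (rho t.+1 i).

Lemma tgt_stay rho i k : ivalid rho i -> rho k i = tgt -> forall m, (k <= m)%N -> rho m i = tgt.
Proof.
move=> Hv Hk m /subnK <-; elim: (m - k)%N => [|d IH] //=.
by rewrite addSn; apply: tgt_next; rewrite -IH; apply: Hv.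
Qed.

Definition wt (rho : nat -> config) (t : nat) i := tcost (rho t) (rho t.+1) i.

Definition costR (rho : nat -> config) i : \bar R :=
  match pselect (exists k, rho k i == tgt) with
  | left P => ((\sum_(j < @ex_minn (fun k => rho k i == tgt) P)
                 tcost (rho j) (rho j.+1) i)%N%:R)%:E
  | right _ => +oo%E
  end.

Lemma cost_costR i sigma c : cost R i sigma c = costR (play sigma c) i.
Proof. by []. Qed.

Lemma wt_tgt rho t i : rho t i = tgt -> rho t.+1 i = tgt -> wt rho t i = 0%N.
Proof. by rewrite /wt /tcost => -> ->; rewrite lcost_tgt. Qed.

Lemma costR_eq rho i K : ivalid rho i -> rho K i = tgt ->
  costR rho i = ((\sum_(j < K) wt rho j i)%N%:R)%:E.
Proof.
move=> Hv HK; rewrite /costR; case: pselect => [P|nP]; last first.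
  by exfalso; apply: nP; exists K; apply/eqP.
case: ex_minnP => m /eqP Hm Hmin.
have mK : (m <= K)%N by apply: Hmin; apply/eqP.
congr ((_%:R)%:E).
rewrite -(big_mkord xpredT (fun j => tcost (rho j) (rho j.+1) i)).
rewrite -(big_mkord xpredT (fun j => wt rho j i)) (big_cat_nat _ mK) //=.
rewrite [X in (_ + X)%N]big1_seq ?addn0 // => j /andP[_].
rewrite mem_index_iota => /andP[mj _].
apply: wt_tgt; apply: (tgt_stay Hv Hm) => //; exact: leqW.
Qed.

Lemma costR_oo rho i : (forall K, rho K i != tgt) -> costR rho i = +oo%E.
Proof.
move=> H; rewrite /costR; case: pselect => [[k Hk]|] //.
by move: (H k); rewrite Hk.
Qed.

Lemma costR_shift rho rho' i m : ivalid rho i -> (forall t, rho (m + t)%N = rho' t) ->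
  costR rho i = (((\sum_(j < m) wt rho j i)%N%:R)%:E + costR rho' i)%E.
Proof.
move=> Hv Hs.
have Hv' : ivalid rho' i by move=> t; rewrite -!Hs addnS; apply: Hv.
case: (pselect (exists K, rho' K i == tgt)) => [[K /eqP HK]|nK].
  rewrite (costR_eq Hv' HK) (@costR_eq rho i (m + K)) ?Hs //.
  rewrite -EFinD -natrD; congr ((_%:R)%:E).
  rewrite -(big_mkord xpredT (fun j => wt rho' j i)).
  rewrite -(big_mkord xpredT (fun j => wt rho j i)).
  rewrite -(big_mkord xpredT (fun j => wt rho j i)) (big_cat_nat _ (leq_addr K m)) //=.
  congr (_ + _)%N; rewrite -{1}[m]add0n big_addn addKn.
  by apply: eq_bigr => j _; rewrite /wt addnC Hs -addnS Hs.
rewrite (costR_oo (rho := rho')); last by move=> K; apply/negP => HK; apply: nK; exists K.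
rewrite costR_oo ?addey // => K; apply/negP => /eqP HK; apply: nK.
exists K; rewrite -Hs; apply/eqP; apply: (tgt_stay Hv HK); exact: leq_addl.
Qed.

Fixpoint reach (k : nat) (v : V) : bool :=
  (v == tgt) || (if k is k'.+1 then [exists w, erel v w && reach k' w] else false).

Lemma reach_mono k v : reach k v -> reach k.+1 v.
Proof.
elim: k v => [|k IH] v /=; first by rewrite orbF => ->.
case/orP => [->//|/existsP[w /andP[e r]]].
by apply/orP; right; apply/existsP; exists w; apply/andP; split => //; exact: IH.
Qed.

Lemma reach_monoD k d v : reach k v -> reach (k + d) v.
Proof. by elim: d => [|d IH]; rewrite ?addn0 // addnS => /IH /reach_mono. Qed.

Lemma reach_path p v : path erel v p -> last v p = tgt -> reach (size p) v.
Proof.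
elim: p v => [|w p IH] v /=; first by move=> _ ->; rewrite eqxx.
case/andP => e pa l; apply/orP; right; apply/existsP; exists w.
by rewrite e IH.
Qed.

Lemma reach_all v : reach #|V| v.
Proof.
have := tgt_reachable v => /connectP[p pa lp].
move: lp; case: (shortenP pa) => p' pa' u _ lp'.
have sz : (size p' < #|V|)%N.
  by have := max_card (mem (v :: p')); rewrite (card_uniqP u).
have := reach_path pa' (esym lp') => /(reach_monoD (#|V| - size p')).
by rewrite subnKC // ltnW.
Qed.

Definition rank (v : V) : nat := ex_minn (ex_intro (fun k => reach k v) _ (reach_all v)).

Lemma rank_reach v : reach (rank v) v.
Proof. by rewrite /rank; case: ex_minnP. Qed.

Lemma rank_min v k : reach k v -> (rank v <= k)%N.
Proof. by rewrite /rank; case: ex_minnP => m _ H /H. Qed.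

Lemma rank_le v : (rank v <= #|V|)%N.
Proof. exact: rank_min (reach_all v). Qed.

Lemma rank0 v : rank v = 0%N -> v = tgt.
Proof. by move=> H; have := rank_reach v; rewrite H /= orbF => /eqP. Qed.

Definition nx (v : V) : V :=
  if v == tgt then tgt else odflt tgt [pick w | erel v w && reach (rank v).-1 w].

Lemma nx_spec v : v != tgt -> erel v (nx v) /\ (rank (nx v) < rank v)%N.
Proof.
move=> Hv; rewrite /nx (negbTE Hv).
have Hr : rank v <> 0%N by move=> /rank0 E; move: Hv; rewrite E eqxx.
have := rank_reach v; case E: (rank v) => [|k] //= /orP[/eqP E'|/existsP[w Hw]].
  by move: Hv; rewrite E' eqxx.
case: pickP => [w' /andP[e r]|/(_ w)]; last by rewrite Hw.
by split => //; apply: leq_ltn_trans (rank_min r) _.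
Qed.

Lemma nx_edge v : erel v (nx v).
Proof.
case: (eqVneq v tgt) => [->|Hv]; last by case: (nx_spec Hv).
by rewrite /nx eqxx; exact: tgt_loop.
Qed.

Lemma nx_tgt : nx tgt = tgt.
Proof. by rewrite /nx eqxx. Qed.

Lemma nx_reach rho i : (forall t, rho t.+1 i = nx (rho t i)) -> rho #|V| i = tgt.
Proof.
move=> H.
have key : forall t, (rho t i == tgt) || (t + rank (rho t i) <= rank (rho 0%N i))%N.
  elim=> [|t IH]; first by rewrite leqnn orbT.
  rewrite H; case/orP: IH => [/eqP ->|IH]; first by rewrite nx_tgt eqxx.
  case: (eqVneq (rho t i) tgt) => [->|Ht]; first by rewrite nx_tgt eqxx.
  apply/orP; right; case: (nx_spec Ht) => _ lt.
  by apply: leq_trans IH; rewrite addSn -addnS leq_add2l.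
case/orP: (key #|V|) => [/eqP//|le].
have := leq_trans le (rank_le _); rewrite -[X in (_ <= X)%N -> _]addn0 leq_add2l leqn0 => /eqP.
exact: rank0.
Qed.

Definition nxs i : strategy := fun h => nx (last (c_src A n) h i).

Lemma nxs_valid i : valid_strategy i (nxs i).
Proof. by move=> x h; exact: nx_edge. Qed.

Lemma load_le c c' i : (load c c' i <= n)%N.
Proof. by rewrite /load -[X in (_ <= X)%N]card_ord max_card. Qed.

Lemma tcost_le c c' i : (tcost c c' i <= kappa A n)%N.
Proof.
rewrite /tcost /lcost; case E: (edge (c i) (c' i)) => [l|] //.
apply: leq_trans (edge_mono E (load_le c c' i)) _.
rewrite /kappa; apply: leq_trans _ (@leq_bigmax _ (fun u => \max_(v : V) lcost u v n) (c i)).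
by apply: leq_trans _ (@leq_bigmax _ (fun v => lcost (c i) v n) (c' i)); rewrite /lcost E.
Qed.

Lemma cost_nxs sigma c i : exists m : nat,
  cost R i (upd sigma i (nxs i)) c = (m%:R)%:E /\ (m <= Ybound A n)%N.
Proof.
set rho := play (upd sigma i (nxs i)) c.
have Hv : ivalid rho i.
  by apply: run_valid; rewrite /upd eqxx; exact: nxs_valid.
have Hn : forall t, rho t.+1 i = nx (rho t i).
  by move=> t; rewrite /rho play_S ffunE /upd eqxx /nxs last_hist.
exists (\sum_(j < #|V|) wt rho j i)%N; split.
  by rewrite cost_costR (costR_eq Hv (nx_reach Hn)).
rewrite /Ybound -[X in (X * _)%N]card_ord -sum_nat_const.
by apply: leq_sum => j _; exact: tcost_le.
Qed.

Definition infS i sigma c : set (\bar R) :=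
  [set cost R i (upd sigma i s) c | s in [set s | valid_strategy i s]]%classic.

Definition others_valid i sigma := forall j, j != i -> valid_strategy j (sigma j).

Lemma cost_nat i sigma c :
  cost R i sigma c = +oo%E \/ exists m : nat, cost R i sigma c = (m%:R)%:E.
Proof. by rewrite /cost; case: pselect => [P|nP]; [right; eexists | left]. Qed.

Lemma inf_attained i sigma c : exists s m,
  [/\ valid_strategy i s, cost R i (upd sigma i s) c = (m%:R)%:E,
      (m <= Ybound A n)%N & ereal_inf (infS i sigma c) = (m%:R)%:E].
Proof.
pose P m := `[< exists s, valid_strategy i s /\ cost R i (upd sigma i s) c = (m%:R)%:E >].
have [m0 [H0 Hb]] := cost_nxs sigma c i.
have P0 : P m0 by apply/asboolP; exists (nxs i); split => //; exact: nxs_valid.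
have exP : exists m, P m by exists m0.
case: (ex_minnP exP) => m /asboolP [s [vs Hs]] Hmin.
exists s, m; split => //; first exact: leq_trans (Hmin m0 P0) Hb.
apply/eqP; rewrite eq_le; apply/andP; split.
  by apply: ereal_inf_lbound; exists s.
apply: le_ereal_inf_tmp => _ [s' vs' <-].
case: (cost_nat i (upd sigma i s') c) => [->|[m' Hm']]; first exact: leey.
rewrite Hm' lee_fin ler_nat; apply: Hmin; apply/asboolP; exists s'; split => //.
Qed.

Lemma val_attained i c : exists pi M,
  [/\ others_valid i pi, (M <= Ybound A n)%N, Defs.val R i c = (M%:R)%:E
    & ereal_inf (infS i pi c) = (M%:R)%:E].
Proof.
pose Q M := `[< exists pi, others_valid i pi /\ ereal_inf (infS i pi c) = (M%:R)%:E >].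
have Qb : forall M, Q M -> (M <= Ybound A n)%N.
  move=> M /asboolP [pi [_ H]]; have [s [m [_ _ Hb Hi]]] := inf_attained i pi c.
  by move: H; rewrite Hi => /eqP; rewrite eqe eqr_nat => /eqP <-.
have exQ : exists M, Q M.
  pose pi0 : profile := fun j => nxs j.
  have [s [m [_ _ _ Hi]]] := inf_attained i pi0 c.
  by exists m; apply/asboolP; exists pi0; split => // j _; exact: nxs_valid.
case: (ex_maxnP exQ Qb) => M QM Hmax.
have := QM => /asboolP [pi [vpi Hpi]].
exists pi, M; split => //; first exact: Qb.
apply/eqP; rewrite eq_le; apply/andP; split.
  apply: ge_ereal_sup => _ [pi' vpi' <-].
  have [s [m [_ _ _ Hi]]] := inf_attained i pi' c.
  have Hi' : ereal_inf (infS i pi' c) = (m%:R)%:E by [].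
  rewrite Hi' lee_fin ler_nat; apply: Hmax; apply/asboolP; exists pi'; split => //.
apply: ereal_sup_ubound; exists pi => //.
Qed.

Lemma val_fin i c : exists M, Defs.val R i c = (M%:R)%:E /\ (M <= Ybound A n)%N.
Proof. by have [pi [M [_ HM Hv _]]] := val_attained i c; exists M. Qed.

Lemma val_ub i c sigma : others_valid i sigma -> exists s m,
  [/\ valid_strategy i s, cost R i (upd sigma i s) c = (m%:R)%:E
    & ((m%:R)%:E <= Defs.val R i c)%E].
Proof.
move=> vs; have [s [m [vs' Hc _ Hi]]] := inf_attained i sigma c.
exists s, m; split => //; rewrite -Hi.
by apply: ereal_sup_ubound; exists sigma.
Qed.

Lemma punish i c : exists pi, others_valid i pi /\
  forall s, valid_strategy i s -> (Defs.val R i c <= cost R i (upd pi i s) c)%E.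
Proof.
have [pi [M [vpi _ Hv Hi]]] := val_attained i c.
exists pi; split => // s vs; rewrite Hv -Hi.
by apply: ereal_inf_lbound; exists s.
Qed.

Lemma hist_shift sigma sigma' c pre d m :
  hist sigma c m = rcons pre d ->
  (forall j x h, sigma' j (x :: h) = sigma j (pre ++ x :: h)) ->
  forall t, hist sigma c (m + t) = pre ++ hist sigma' d t.
Proof.
move=> Hm Hs; elim=> [|t IH]; first by rewrite addn0 Hm cats1.
rewrite addnS /= IH rcons_cat; congr (_ ++ _); congr rcons.
by apply/ffunP => j; rewrite !ffunE; have [h ->] := hist_head sigma' d t; rewrite Hs.
Qed.

Lemma play_shift sigma sigma' c pre d m :
  hist sigma c m = rcons pre d ->
  (forall j x h, sigma' j (x :: h) = sigma j (pre ++ x :: h)) ->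
  forall t, play sigma c (m + t) = play sigma' d t.
Proof.
move=> Hm Hs t; rewrite /play (hist_shift Hm Hs) last_cat.
exact: last_hist.
Qed.

Lemma hist_agree s1 s2 c : (forall j h, s1 j (c :: h) = s2 j (c :: h)) ->
  forall t, hist s1 c t = hist s2 c t.
Proof.
move=> H; elim=> // t IH /=; rewrite IH; congr rcons.
by apply/ffunP => j; rewrite !ffunE; have [h ->] := hist_head s2 c t; exact: H.
Qed.

Lemma cost_agree s1 s2 c i : (forall j h, s1 j (c :: h) = s2 j (c :: h)) ->
  cost R i s1 c = cost R i s2 c.
Proof.
move=> H; rewrite !cost_costR; congr costR.
by apply: funext => t; rewrite /play (hist_agree H).
Qed.

Lemma valid_pre (j : 'I_n) (s : strategy) (pre : history) : valid_strategy j s -> valid_strategy j (fun h => s (pre ++ h)).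
Proof.
case: pre => [|y p] Hs x h //=.
by have := Hs y (p ++ x :: h); rewrite last_cat.
Qed.

Lemma profile_ivalid sigma c : valid_profile sigma -> forall i, ivalid (play sigma c) i.
Proof. by move=> Hv i; apply: run_valid. Qed.

Lemma upd_valid sigma i s : valid_profile sigma -> valid_strategy i s -> valid_profile (upd sigma i s).
Proof. by move=> Hv Hs j; rewrite /upd; case: eqP => // ->. Qed.

Definition csum rho i a b := (\sum_(a <= j < b) wt rho j i)%N.

Lemma costR_eqn rho i K : ivalid rho i -> rho K i = tgt ->
  costR rho i = ((csum rho i 0 K)%:R)%:E.
Proof. by move=> Hv HK; rewrite (costR_eq Hv HK) /csum big_mkord. Qed.

Lemma costR_shiftn rho rho' i m : ivalid rho i -> (forall t, rho (m + t)%N = rho' t) ->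
  costR rho i = (((csum rho i 0 m)%:R)%:E + costR rho' i)%E.
Proof. by move=> Hv Hs; rewrite (costR_shift Hv Hs) /csum big_mkord. Qed.

Lemma csum_split rho i (a b e : nat) : (a <= b <= e)%N -> csum rho i a e = (csum rho i a b + csum rho i b e)%N.
Proof. by move=> /andP[ab bc]; rewrite /csum (big_cat_nat ab bc). Qed.

Lemma csum_eq rho rho' i a b : (forall t, (t <= b)%N -> rho t = rho' t) ->
  csum rho i a b = csum rho' i a b.
Proof.
move=> H; rewrite /csum; apply: eq_big_nat => t /andP[_ tb].
by rewrite /wt !H // ltnW.
Qed.

Lemma dev_step i c c' c'' : c'' \in dev i c c' -> step c c''.
Proof. by rewrite inE => /andP[]. Qed.

Lemma dev_eq i c c' c'' j : c'' \in dev i c c' -> j != i -> c'' j = c' j.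
Proof. by rewrite inE => /andP[_ /forallP /(_ j) /implyP H] /H /eqP. Qed.

Lemma NE_dev sigma i k T c'' : NashEq R sigma ->
  let rho := play sigma (c_src A n) in
  c'' \in dev i (rho k) (rho k.+1) -> (k <= T)%N -> rho T i = tgt ->
  (((csum rho i k T)%:R)%:E <= ((tcost (rho k) c'' i)%:R)%:E + Defs.val R i c'')%E.
Proof.
move=> [Hv HNE] rho Hdev kT HT.
set pre := hist sigma (c_src A n) k.
pose sigma' : profile := fun j h => sigma j (pre ++ h).
have ov : others_valid i sigma' by move=> j _; apply: valid_pre.
have [s [m [vs Hcs Hm]]] := val_ub c'' ov.
pose sd : strategy := fun h => if h == pre then c'' i
  else if take (size pre) h == pre then s (drop (size pre) h) else sigma i h.
have vsd : valid_strategy i sd.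
  move=> x h; rewrite /sd; case: ifP => [/eqP E|/negbT ne].
    have := dev_step Hdev => /forallP /(_ i).
    by rewrite -/(last x h) -[last x h]/(last (c_src A n) (x :: h)) E last_hist.
  case: ifP => [/eqP E|_]; last exact: Hv.
  have := cat_take_drop (size pre) (x :: h); rewrite E.
  case Ed: (drop (size pre) (x :: h)) => [|y h'].
    by move=> E2; move: ne; rewrite -E2 cats0 eqxx.
  move=> E2; have := vs y h'.
  by rewrite -[last x h]/(last (c_src A n) (x :: h)) -E2 last_cat.
set sigma2 := upd sigma i sd.
have sz : size pre = k.+1 by rewrite hist_size.
have H2 : forall t, (t <= k)%N -> hist sigma2 (c_src A n) t = hist sigma (c_src A n) t.
  elim=> // t IH tk /=; rewrite IH ?(ltnW tk) //; congr rcons.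
  apply/ffunP => j; rewrite !ffunE /sigma2 /upd; case: eqP => // ->.
  rewrite /sd; have st : size (hist sigma (c_src A n) t) = t.+1 by rewrite hist_size.
  have ne : hist sigma (c_src A n) t != pre.
    by apply/eqP => /(f_equal size); rewrite st sz => -[] E; move: tk; rewrite E ltnn.
  rewrite (negbTE ne) take_oversize ?(negbTE ne) // st sz; exact: ltnW.
have H2k : hist sigma2 (c_src A n) k.+1 = rcons pre c''.
  rewrite /= H2 //; congr rcons; apply/ffunP => j; rewrite ffunE /sigma2 /upd.
  case: eqP => [->|/eqP ji]; first by rewrite /sd eqxx.
  by rewrite (dev_eq Hdev ji) /rho play_S ffunE.
set sigma3 := upd sigma' i s.
have Hs3 : forall j x h, sigma3 j (x :: h) = sigma2 j (pre ++ x :: h).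
  move=> j x h; rewrite /sigma3 /sigma2 /upd; case: eqP => // _.
  rewrite /sd; have ne : pre ++ x :: h != pre.
    by apply/eqP => /(f_equal size); rewrite size_cat /=; lia.
  by rewrite (negbTE ne) take_size_cat // eqxx drop_size_cat.
have Hp := play_shift H2k Hs3.
have HNE' := HNE i sd vsd; rewrite -/sigma2 in HNE'.
have Hv2 : ivalid (play sigma2 (c_src A n)) i.
  by apply: run_valid; rewrite /sigma2 /upd eqxx.
have E2 : cost R i sigma2 (c_src A n) =
    (((csum (play sigma2 (c_src A n)) i 0 k.+1)%:R)%:E + (m%:R)%:E)%E.
  by rewrite cost_costR (costR_shiftn Hv2 Hp) -cost_costR Hcs.
have E1 : cost R i sigma (c_src A n) = ((csum rho i 0 T)%:R)%:E.
  by rewrite cost_costR (costR_eqn (profile_ivalid _ Hv i) HT).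
rewrite E1 E2 in HNE'.
have Hpk : forall t, (t <= k)%N -> play sigma2 (c_src A n) t = rho t.
  by move=> t tk; rewrite /play H2.
have Hc2 : csum (play sigma2 (c_src A n)) i 0 k.+1 = (csum rho i 0 k + tcost (rho k) c'' i)%N.
  rewrite (@csum_split _ _ 0 k) ?leqnSn // (csum_eq i 0 (b := k) Hpk).
  congr (_ + _)%N; rewrite /csum big_nat1 /wt Hpk //.
  by rewrite /play H2k last_rcons.
rewrite Hc2 -EFinD -natrD lee_fin ler_nat (@csum_split _ _ 0 k T) // -addnA leq_add2l in HNE'.
apply: le_trans (_ : (((tcost (rho k) c'' i + m)%N%:R)%:E <= _)%E).
  by rewrite lee_fin ler_nat.
by rewrite natrD EFinD leeD2l.
Qed.

Fixpoint bseq rho (k : nat) : 'I_n -> \bar R :=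
  if k is k'.+1 then fun i =>
    Order.min (bseq rho k' i - ((tcost (rho k') (rho k'.+1) i)%:R)%:E)%E
      (\big[Order.min/+oo%E]_(c'' in dev i (rho k') (rho k'.+1))
         (((tcost (rho k') c'' i)%:R)%:E + Defs.val R i c''
            - ((tcost (rho k') (rho k'.+1) i)%:R)%:E)%E)
  else fun _ => +oo%E.

Lemma bseq_S rho k i : bseq rho k.+1 i =
    Order.min (bseq rho k i - ((tcost (rho k) (rho k.+1) i)%:R)%:E)%E
      (\big[Order.min/+oo%E]_(c'' in dev i (rho k) (rho k.+1))
         (((tcost (rho k) c'' i)%:R)%:E + Defs.val R i c''
            - ((tcost (rho k) (rho k.+1) i)%:R)%:E)%E).
Proof. by []. Qed.

Lemma Gedge_bseq (gamma : 'I_n -> R) rho k :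
  (forall i, inB A n (bseq rho k i)) -> (forall i, inB A n (bseq rho k.+1 i)) ->
  step (rho k) (rho k.+1) ->
  Gedge gamma (rho k, bseq rho k) (\sum_(i < n) gamma i * (tcost (rho k) (rho k.+1) i)%:R)
    (rho k.+1, bseq rho k.+1).
Proof. by move=> H1 H2 H3; split. Qed.

Lemma gpath_of (gamma : 'I_n -> R) (xs : nat -> vertex A n R) (zs : nat -> R) T :
  (forall k, (k < T)%N -> Gedge gamma (xs k) (zs k) (xs k.+1)) ->
  forall k, (k <= T)%N -> gpath gamma (xs k) (xs T) (\sum_(k <= j < T) zs j).
Proof.
move=> H.
suff S : forall d k, (k + d)%N = T ->
    gpath gamma (xs k) (xs T) (\sum_(k <= j < T) zs j).
  by move=> k kT; apply: (S (T - k)%N); rewrite subnKC.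
elim=> [|d IH] k Hk.
  by rewrite addn0 in Hk; rewrite Hk big_geq //; exact: gpath_nil.
have kT : (k < T)%N by lia.
rewrite big_ltn //; apply: gpath_cons (H k kT) (IH k.+1 _); lia.
Qed.

Definition isintE (x : \bar R) := x = +oo%E \/ exists a b : nat, x = (a%:R - b%:R)%:E.

Lemma min_isint (x y : \bar R) : isintE x -> isintE y -> isintE (Order.min x y).
Proof. by move=> Hx Hy; rewrite minEle; case: ifP. Qed.

Lemma bseq_isint rho k i : isintE (bseq rho k i).
Proof.
elim: k => [|k IH]; first by left.
rewrite bseq_S; apply: min_isint.
  case: IH => [->|[a [b ->]]]; first by left.
  right; exists a, (b + tcost (rho k) (rho k.+1) i)%N.
  by rewrite -EFinD natrD opprD addrA.
apply: (big_ind isintE); [by left | exact: min_isint | move=> c'' _].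
have [M [-> _]] := val_fin i c''.
right; exists (tcost (rho k) c'' i + M)%N, (tcost (rho k) (rho k.+1) i).
by rewrite -EFinD natrD.
Qed.

Lemma isint_inB (x : \bar R) (M : nat) : isintE x -> (0%R <= x)%E -> (x <= (M%:R)%:E)%E ->
  (M <= Ybound A n)%N -> inB A n x.
Proof.
move=> [->|[a [b ->]]] H0 HM HY; first by left.
move: H0 HM; rewrite !lee_fin subr_ge0 ler_nat => ba.
rewrite -natrB // ler_nat => HM; right; exists (a - b)%N; split => //.
exact: leq_trans HM HY.
Qed.

Lemma NE_bseq sigma T : NashEq R sigma ->
  let rho := play sigma (c_src A n) in
  (forall i, rho T i = tgt) -> forall k, (k <= T)%N -> forall i,
  inB A n (bseq rho k i) /\ (((csum rho i k T)%:R)%:E <= bseq rho k i)%E.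
Proof.
move=> HNE rho HT; elim=> [|k IH] kT i; first by split; [left | exact: leey].
have [_ L] := IH (ltnW kT) i.
set w := tcost (rho k) (rho k.+1) i.
have Hs : csum rho i k T = (w + csum rho i k.+1 T)%N.
  by rewrite (@csum_split _ _ k k.+1 T) ?leqnSn // /csum big_nat1.
have low : (((csum rho i k.+1 T)%:R)%:E <= bseq rho k.+1 i)%E.
  rewrite bseq_S le_min; apply/andP; split.
    by rewrite leeBrDr // -EFinD -natrD addnC -Hs.
  apply: le_bigmin; first exact: leey.
  move=> c'' Hd; rewrite leeBrDr //.
  have := NE_dev HNE Hd (ltnW kT) (HT i); rewrite -/rho Hs.
  by rewrite natrD EFinD addeC.
split => //.
have [M [HvM HMY]] := val_fin i (rho k.+1).
apply: (isint_inB (bseq_isint rho k.+1 i) _ _ HMY).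
  by apply: le_trans low; rewrite lee_fin.
rewrite bseq_S ge_min; apply/orP; right.
have Hin : rho k.+1 \in dev i (rho k) (rho k.+1).
  rewrite inE; apply/andP; split.
    by apply/forallP => j; apply: (profile_ivalid _ (proj1 HNE)).
  by apply/forallP => j; apply/implyP.
apply: le_trans (bigmin_le_cond _ _ Hin) _.
by rewrite HvM -EFinD addrC addrK.
Qed.

Lemma NE_path (gamma : 'I_n -> R) sigma : NashEq R sigma ->
  exists t : 'I_n -> nat, (forall i, cost R i sigma (c_src A n) = ((t i)%:R)%:E) /\
    exists b, gpath gamma (c_src A n, fun _ => +oo%E) (c_tgt A n, b)
                (\sum_(i < n) gamma i * (t i)%:R).
Proof.
move=> HNE; have [Hv HN] := HNE.
set rho := play sigma (c_src A n).
have HK : forall i, exists K, rho K i == tgt.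
  move=> i; have [m [Hm _]] := cost_nxs sigma (c_src A n) i.
  have := HN i (nxs i) (nxs_valid i); rewrite Hm.
  case: (pselect (exists K, rho K i == tgt)) => // nK.
  rewrite cost_costR costR_oo ?leye_eq //.
  by move=> K; apply/negP => E; apply: nK; exists K.
pose T := (\max_(i < n) xchoose (HK i))%N.
have HT : forall i, rho T i = tgt.
  move=> i; apply: (tgt_stay (profile_ivalid _ Hv i) (eqP (xchooseP (HK i)))).
  exact: (@leq_bigmax _ (fun i => xchoose (HK i)) i).
exists (fun i => csum rho i 0 T); split.
  by move=> i; rewrite cost_costR (costR_eqn (profile_ivalid _ Hv i) (HT i)).
exists (bseq rho T).
have ET : rho T = c_tgt A n by apply/ffunP => i; rewrite ffunE HT.
pose xs k : vertex A n R := (rho k, bseq rho k).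
pose zs k := \sum_(i < n) gamma i * (tcost (rho k) (rho k.+1) i)%:R.
have H : forall k, (k < T)%N -> Gedge gamma (xs k) (zs k) (xs k.+1).
  move=> k kT; apply: Gedge_bseq.
  - by move=> i; case: (NE_bseq HNE HT (ltnW kT) i).
  - by move=> i; case: (NE_bseq HNE HT kT i).
  - by apply/forallP => i; apply: (profile_ivalid _ Hv).
have := gpath_of H (leq0n T); rewrite /xs ET.
have -> : \sum_(0 <= j < T) zs j = \sum_(i < n) gamma i * (csum rho i 0 T)%:R.
  rewrite /zs exchange_big; apply: eq_bigr => i _.
  by rewrite /csum natr_sum mulr_sumr.
by [].
Qed.

Lemma gpath_seq (gamma : 'I_n -> R) x y q : gpath gamma x y q ->
  exists T (xs : nat -> vertex A n R) (zs : nat -> R),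
  [/\ xs 0%N = x, xs T = y, forall k, (k < T)%N -> Gedge gamma (xs k) (zs k) (xs k.+1)
    & q = \sum_(0 <= k < T) zs k].
Proof.
elim=> [x0|x0 y0 t z p He _ [T [xs [zs [H0 HT Hs Hq]]]]].
  by exists 0%N, (fun _ => x0), (fun _ => 0); split => //; rewrite big_geq.
exists T.+1, (fun k => if k is k'.+1 then xs k' else x0),
  (fun k => if k is k'.+1 then zs k' else z); split => //.
  by case => [_|k] /=; [rewrite H0 | rewrite ltnS => /Hs].
by rewrite big_nat_recl // Hq.
Qed.

Lemma inB_ge0 (x : \bar R) : inB A n x -> (0%R <= x)%E.
Proof. by case=> [->|[k [_ ->]]]; [exact: leey | rewrite lee_fin ler0n]. Qed.

Lemma path_budget (gamma : 'I_n -> R) T (xs : nat -> vertex A n R) zs rho k i c'' :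
  (forall k, (k < T)%N -> Gedge gamma (xs k) (zs k) (xs k.+1)) ->
  (forall t, (t <= T)%N -> rho t = (xs t).1) -> (k < T)%N ->
  c'' \in dev i (rho k) (rho k.+1) ->
  (((csum rho i k T)%:R)%:E <= ((tcost (rho k) c'' i)%:R)%:E + Defs.val R i c'')%E.
Proof.
move=> H Hr kT Hd.
have [M [HvM _]] := val_fin i c''.
set D : R := (tcost (rho k) c'' i)%:R + M%:R.
have Hw : forall j, (j < T)%N -> wt rho j i = tcost (xs j).1 (xs j.+1).1 i.
  by move=> j jT; rewrite /wt !Hr // ltnW.
have claim : forall d, (k.+1 + d <= T)%N ->
    ((xs (k.+1 + d)%N).2 i <= (D - (csum rho i k (k.+1 + d))%:R)%:E)%E.
  elim=> [|d IH] Hd'.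
    have [_ _ _ _ Hb] := H k kT; rewrite addn0 Hb ge_min; apply/orP; right.
    rewrite !Hr ?(ltnW kT) // in Hd.
    apply: le_trans (bigmin_le_cond _ _ Hd) _.
    rewrite -!Hr ?(ltnW kT) // HvM /csum big_nat1 /wt -EFinD.
    by [].
  have jT : (k.+1 + d < T)%N by rewrite -addnS.
  have [_ _ _ _ Hb] := H _ jT; rewrite addnS Hb ge_min; apply/orP; left.
  apply: le_trans (leeB (IH (ltnW jT)) (lexx _)) _.
  rewrite -EFinB lee_fin (@csum_split _ _ k (k.+1 + d) (k.+1 + d).+1); last first.
    by apply/andP; split; lia.
  by rewrite /csum big_nat1 natrD opprD addrA Hw.
have T0 : (0 < T)%N by apply: leq_ltn_trans (leq0n k) kT.
have TT : (T.-1 < T)%N by rewrite ltn_predL.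
have [_ HB _ _ _] := H T.-1 TT.
have := inB_ge0 (HB i); rewrite prednK //.
have := claim (T - k.+1)%N; rewrite subnKC // => /(_ (leqnn T)) Hc H0.
have := le_trans H0 Hc; rewrite lee_fin subr_ge0 => Hle.
by rewrite HvM -EFinD lee_fin.
Qed.

Lemma mkseqS (f : nat -> config) k : mkseq f k.+1 = rcons (mkseq f k) (f k).
Proof. by rewrite /mkseq -addn1 iotaD map_cat /= cats1. Qed.

Lemma last_mkseq (f : nat -> config) k x0 : last x0 (mkseq f k.+1) = f k.
Proof. by rewrite mkseqS last_rcons. Qed.

Lemma find_iota (p : pred nat) N d : (d < N)%N -> p d ->
  (forall t, (t < d)%N -> ~~ p t) -> find p (iota 0 N) = d.
Proof.
move=> dN pd Hl.
have E : N = (d + (N - d.+1).+1)%N by lia.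
rewrite {1}E iotaD find_cat /= add0n pd.
have -> : has p (iota 0 d) = false.
  by apply/hasPn => t; rewrite mem_iota => /andP[_ td]; apply: Hl.
by rewrite size_iota addn0.
Qed.

Lemma last_drop (s : seq config) d x0 : (d < size s)%N -> last x0 (drop d s) = last x0 s.
Proof.
move=> ds; rewrite -{2}(cat_take_drop d s) last_cat (drop_nth x0 ds) /=.
by [].
Qed.

Definition pun i c : profile := sval (cid (punish i c)).

Lemma pun_spec i c : others_valid i (pun i c) /\
  forall s, valid_strategy i s -> (Defs.val R i c <= cost R i (upd (pun i c) i s) c)%E.
Proof. exact: (svalP (cid (punish i c))). Qed.

Definition firstdev rho (h : history) :=
  find (fun t => nth (c_src A n) h t != rho t) (iota 0 (size h)).

Definition sigmaP rho : profile := fun j h =>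
  if h == mkseq rho (size h) then rho (size h) j
  else match [pick i0 | nth (c_src A n) h (firstdev rho h) i0 != rho (firstdev rho h) i0] with
    | Some i0 => if (j != i0) && (firstdev rho h < size h)%N
                 then pun i0 (nth (c_src A n) h (firstdev rho h)) j (drop (firstdev rho h) h)
                 else nx (last (c_src A n) h j)
    | None => nx (last (c_src A n) h j)
    end.

Lemma sigmaP_valid rho : (forall k, step (rho k) (rho k.+1)) -> valid_profile (sigmaP rho).
Proof.
move=> Hs j x h; rewrite /sigmaP.
case: ifP => [/eqP E|_].
  have L : last x h = rho (size h).
    have sz : size (x :: h) = (size h).+1 by [].
    by rewrite -[last x h]/(last (c_src A n) (x :: h)) E sz last_mkseq.
  by rewrite L; exact: (forallP (Hs (size h)) j).
case: pickP => [i0 _|_]; last exact: nx_edge.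
case: ifP => [/andP[ji dsz]|_]; last exact: nx_edge.
have [vpi _] := pun_spec i0 (nth (c_src A n) (x :: h) (firstdev rho (x :: h))).
rewrite (drop_nth (c_src A n) dsz).
have := vpi j ji (nth (c_src A n) (x :: h) (firstdev rho (x :: h)))
  (drop (firstdev rho (x :: h)).+1 (x :: h)).
by rewrite -[last x h]/(last (c_src A n) (x :: h)) -(last_drop _ dsz) (drop_nth (c_src A n) dsz).
Qed.

Lemma hist_sigmaP rho k : rho 0%N = c_src A n ->
  hist (sigmaP rho) (c_src A n) k = mkseq rho k.+1.
Proof.
move=> H0; elim: k => [|k IH]; first by rewrite /mkseq /= H0.
rewrite /= IH [in RHS]mkseqS; congr rcons.
by apply/ffunP => j; rewrite ffunE /sigmaP size_mkseq eqxx.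
Qed.

Lemma path_NE (gamma : 'I_n -> R) b q :
  gpath gamma (c_src A n, fun _ => +oo%E) (c_tgt A n, b) q ->
  exists sigma, NashEq R sigma /\ social_cost gamma sigma = q%:E.
Proof.
move=> /gpath_seq [T [xs [zs [H0 HT Hs Hq]]]].
pose rho t := (xs (minn t T)).1.
have Hr : forall t, (t <= T)%N -> rho t = (xs t).1.
  by move=> t tT; rewrite /rho (minn_idPl tT).
have Hr0 : rho 0%N = c_src A n by rewrite Hr // H0.
have HrT : forall t, (T <= t)%N -> rho t = c_tgt A n.
  by move=> t tT; rewrite /rho (minn_idPr tT) HT.
have Hstep : forall k, step (rho k) (rho k.+1).
  move=> k; case: (ltnP k T) => kT.
    by rewrite !Hr ?(ltnW kT) //; have [_ _ ? _ _] := Hs k kT.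
  by rewrite !HrT ?(leqW kT) //; apply/forallP => j; rewrite ffunE; exact: tgt_loop.
have Hiv : forall i, ivalid rho i by move=> i t; exact: (forallP (Hstep t) i).
pose sigma := sigmaP rho.
have Hvs : valid_profile sigma := sigmaP_valid Hstep.
have Hplay : play sigma (c_src A n) = rho.
  by apply: funext => k; rewrite /play hist_sigmaP // last_mkseq.
have Hcost : forall i, cost R i sigma (c_src A n) = ((csum rho i 0 T)%:R)%:E.
  move=> i; rewrite cost_costR Hplay (costR_eqn (Hiv i) (K := T)) //.
  by rewrite HrT // ffunE.
exists sigma; split; last first.
  rewrite /social_cost.
  under eq_bigr do rewrite Hcost -EFinM.
  rewrite sumEFin Hq; congr EFin.
  have -> : \sum_(0 <= k < T) zs k =
      \sum_(0 <= k < T) \sum_(i < n) gamma i * (wt rho k i)%:R.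
    apply: eq_big_nat => k /andP[_ kT]; have [_ _ _ -> _] := Hs k kT.
    by apply: eq_bigr => i _; rewrite /wt !Hr // ltnW.
  rewrite exchange_big; apply: eq_bigr => i _.
  by rewrite /csum natr_sum mulr_sumr.
split => // i s vs.
pose sigma2 := upd sigma i s.
have Hv2 : ivalid (play sigma2 (c_src A n)) i.
  by apply: run_valid; rewrite /sigma2 /upd eqxx.
case: (pselect (exists t, play sigma2 (c_src A n) t != rho t)) => [ex|nex]; last first.
  have E : play sigma2 (c_src A n) = rho.
    apply: funext => t; apply/eqP; apply/negPn/negP => H.
    by apply: nex; exists t.
  by rewrite [X in (_ <= X)%E]cost_costR E -Hplay -cost_costR.
case: (ex_minnP ex) => d Hd Hmin.
case: d Hd Hmin => [|k] Hd Hmin.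
  by move: Hd; rewrite Hr0 eqxx.
have Heq : forall t, (t <= k)%N -> play sigma2 (c_src A n) t = rho t.
  move=> t tk; case: (eqVneq (play sigma2 (c_src A n) t) (rho t)) => // /Hmin.
  by rewrite ltnNge tk.
pose pre := mkseq rho k.+1.
have Hh : hist sigma2 (c_src A n) k = pre.
  rewrite hist_mkseq /mkseq /pre; apply/eq_in_map => t.
  by rewrite mem_iota => /andP[_ tk]; apply: Heq.
set c'' := play sigma2 (c_src A n) k.+1 in Hd.
have Hc'' : forall j, j != i -> c'' j = rho k.+1 j.
  move=> j ji; rewrite /c'' play_S ffunE Hh /sigma2 /upd (negbTE ji).
  by rewrite /sigma /sigmaP /pre size_mkseq eqxx.
have Hci : c'' i != rho k.+1 i.
  apply: contra Hd => /eqP E; apply/eqP/ffunP => j.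
  by case: (eqVneq j i) => [->|/Hc''].
have kT : (k < T)%N.
  rewrite ltnNge; apply/negP => Tk.
  have := Hv2 k; rewrite Heq // HrT // ffunE -/c'' => /tgt_next Ec.
  by move: Hci; rewrite Ec HrT ?(leqW Tk) // ffunE eqxx.
have Hdev : c'' \in dev i (rho k) (rho k.+1).
  rewrite inE; apply/andP; split.
    apply/forallP => j; case: (eqVneq j i) => [->|ji].
      by have := Hv2 k; rewrite Heq.
    by rewrite (Hc'' j ji); exact: (forallP (Hstep k) j).
  by apply/forallP => j; apply/implyP => ji; rewrite Hc''.
have Hh2 : hist sigma2 (c_src A n) k.+1 = rcons pre c''.
  by rewrite hist_mkseq mkseqS -hist_mkseq Hh.
pose sigma3 : profile := fun j h => sigma2 j (pre ++ h).
have Hp := @play_shift sigma2 sigma3 _ _ _ _ Hh2 (fun j x h => erefl).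
pose pi := pun i c''.
pose s' : strategy := fun h => s (pre ++ h).
have vs' : valid_strategy i s' := valid_pre pre vs.
have [vpi Hpi] := pun_spec i c''.
have Hagree : forall j h, sigma3 j (c'' :: h) = upd pi i s' j (c'' :: h).
  move=> j h; rewrite /sigma3 /sigma2 /upd; case: eqP => [//|/eqP ji].
  rewrite /sigma /sigmaP.
  set H := pre ++ c'' :: h.
  have szH : size H = (k.+2 + size h)%N by rewrite /H size_cat size_mkseq /=; lia.
  have nthH : forall t, (t <= k)%N -> nth (c_src A n) H t = rho t.
    by move=> t tk; rewrite /H nth_cat size_mkseq ltnS tk nth_mkseq.
  have nthk : nth (c_src A n) H k.+1 = c''.
    by rewrite /H nth_cat size_mkseq ltnn subnn.
  have notpath : (H == mkseq rho (size H)) = false.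
    apply/negbTE/negP => /eqP E.
    have := nthk; rewrite {1}E nth_mkseq; last by rewrite szH; lia.
    by move=> E2; move: Hd; rewrite -E2 eqxx.
  have fd : firstdev rho H = k.+1.
    rewrite /firstdev; apply: find_iota; first by rewrite szH; lia.
      by rewrite nthk.
    by move=> t tk; rewrite nthH ?eqxx //; lia.
  rewrite notpath fd nthk.
  case: pickP => [i0 Hi0|Hn]; last by move: (Hn i); rewrite Hci.
  have i0i : i0 = i.
    by case: (eqVneq i0 i) => // i0i; move: Hi0; rewrite Hc'' // eqxx.
  have -> : (k.+1 < size H)%N by rewrite szH; lia.
  by rewrite i0i ji /H drop_size_cat // size_mkseq.
have Hc3 : cost R i sigma3 c'' = cost R i (upd pi i s') c'' := cost_agree i Hagree.
have E2 : cost R i sigma2 (c_src A n) =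
    (((csum (play sigma2 (c_src A n)) i 0 k.+1)%:R)%:E + cost R i sigma3 c'')%E.
  by rewrite cost_costR (costR_shiftn Hv2 Hp) -cost_costR.
have Ecs : csum (play sigma2 (c_src A n)) i 0 k.+1 = (csum rho i 0 k + tcost (rho k) c'' i)%N.
  rewrite (@csum_split _ _ 0 k k.+1) ?leqnSn // (csum_eq i 0 (b := k) Heq).
  by congr (_ + _)%N; rewrite /csum big_nat1 /wt Heq.
have Hb := path_budget Hs Hr kT Hdev.
have [M [HvM _]] := val_fin i c''.
rewrite Hcost E2 Hc3 Ecs.
apply: le_trans (_ : (((csum rho i 0 k + tcost (rho k) c'' i)%:R)%:E + (M%:R)%:E <= _)%E);
  last by apply: leeD2l; rewrite -HvM; apply: Hpi.
rewrite -EFinD -natrD lee_fin ler_nat (@csum_split _ _ 0 k T) ?(ltnW kT) // -addnA leq_add2l.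
by move: Hb; rewrite HvM -EFinD -natrD lee_fin ler_nat.
Qed.

(* ---------- existence of Nash equilibria (Rosenthal potential) ---------- *)
Definition pprof := 'I_n -> nat -> V.
Implicit Types (p : pprof).
Definition pcfg (p : pprof) t : config := [ffun j => p j t].
Definition good (p : pprof) := forall j,
  [/\ p j 0%N = src A, forall t, erel (p j t) (p j t.+1) & exists K, p j K = tgt].
Definition Sc (u v : V) m := (\sum_(k < m) lcost u v k.+1)%N.
Definition ld (p : pprof) t (u v : V) := #|[set j | (p j t == u) && (p j t.+1 == v)]|.
Definition Lm (p : pprof) i t (u v : V) := #|[set j | (j != i) && (p j t == u) && (p j t.+1 == v)]|.
Definition Phit (p : pprof) t := (\sum_(u : V) \sum_(v : V) Sc u v (ld p t u v))%N.
Definition PhiH (p : pprof) H := (\sum_(0 <= t < H) Phit p t)%N.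
Definition costH (p : pprof) i H := (\sum_(0 <= t < H) wt (pcfg p) t i)%N.

Lemma ld_Lm p i t (u v : V) :
  ld p t u v = (((p i t == u) && (p i t.+1 == v)) + Lm p i t u v)%N.
Proof.
rewrite /ld (cardD1 i) inE; congr (_ + _)%N.
by apply: eq_card => j; rewrite !inE andbA.
Qed.

Lemma Sc_add (u v : V) L (b : bool) :
  Sc u v (b + L) = (Sc u v L + (if b then lcost u v L.+1 else 0))%N.
Proof. by case: b; rewrite ?addn0 // add1n /Sc big_ord_recr. Qed.

Lemma Phit_split p i t : Phit p t =
  ((\sum_(u : V) \sum_(v : V) Sc u v (Lm p i t u v)) + wt (pcfg p) t i)%N.
Proof.
rewrite /Phit.
under eq_bigr do under eq_bigr do rewrite (ld_Lm _ i) Sc_add.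
under eq_bigr do rewrite big_split /=.
rewrite big_split /=; congr (_ + _)%N.
rewrite (bigD1 (p i t)) //= [X in (_ + X)%N]big1 ?addn0; last first.
  by move=> u nu; apply: big1 => v _; rewrite eq_sym (negbTE nu).
rewrite (bigD1 (p i t.+1)) //= !eqxx [X in (_ + X)%N]big1 ?addn0; last first.
  by move=> v nv; rewrite eq_sym (negbTE nv).
rewrite /wt /tcost !ffunE; congr lcost.
apply/esym; rewrite /load (cardD1 i) in_cset !ffunE !eqxx /= add1n; congr _.+1.
by apply: eq_card => j; rewrite !inE in_cset !ffunE andbA.
Qed.

Lemma Lm_eq p p' i t (u v : V) : (forall j, j != i -> p j = p' j) -> Lm p i t u v = Lm p' i t u v.
Proof.
move=> H; apply: eq_card => j; rewrite !inE.
by case: (eqVneq j i) => //= ji; rewrite H.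
Qed.

Lemma PhiH_dev p p' i H : (forall j, j != i -> p j = p' j) ->
  (PhiH p' H + costH p i H = PhiH p H + costH p' i H)%N.
Proof.
move=> Hj; rewrite /PhiH /costH -!big_split /=; apply: eq_bigr => t _.
rewrite (Phit_split p' i) (Phit_split p i).
have EB : (\sum_(u : V) \sum_(v : V) Sc u v (Lm p' i t u v) =
    \sum_(u : V) \sum_(v : V) Sc u v (Lm p i t u v))%N.
  by apply: eq_bigr => u _; apply: eq_bigr => v _; rewrite (Lm_eq _ _ _ Hj).
rewrite EB; lia.
Qed.

Lemma stayV (f : nat -> V) k : (forall t, erel (f t) (f t.+1)) -> f k = tgt ->
  forall m, (k <= m)%N -> f m = tgt.
Proof.
move=> Hv Hk m /subnK <-; elim: (m - k)%N => [|d IH] //=.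
by rewrite addSn; apply: tgt_next; rewrite -IH; apply: Hv.
Qed.

Lemma Phit0 p t : (forall j, p j t = tgt) -> (forall j, p j t.+1 = tgt) -> Phit p t = 0%N.
Proof.
move=> H1 H2; apply: big1 => u _; apply: big1 => v _; rewrite /Sc.
case: (eqVneq u tgt) => [->|nu].
  case: (eqVneq v tgt) => [->|nv]; first by apply: big1 => k _; exact: lcost_tgt.
  suff -> : ld p t tgt v = 0%N by rewrite big_ord0.
  apply/eqP; rewrite cards_eq0; apply/eqP/setP => j; rewrite !inE H2.
  by rewrite [tgt == v]eq_sym (negbTE nv) andbF.
suff -> : ld p t u v = 0%N by rewrite big_ord0.
apply/eqP; rewrite cards_eq0; apply/eqP/setP => j; rewrite !inE H1.
by rewrite [tgt == u]eq_sym (negbTE nu).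
Qed.

Lemma PhiH_hor p H H' : good p -> (forall j, p j H = tgt) -> (H <= H')%N -> PhiH p H' = PhiH p H.
Proof.
move=> gp HH HH'; rewrite /PhiH (big_cat_nat (leq0n H) HH') /=.
rewrite [X in (_ + X)%N]big1_seq ?addn0 // => t /andP[_]; rewrite mem_index_iota => /andP[Ht _].
have st : forall j m, (H <= m)%N -> p j m = tgt.
  by move=> j m Hm; have [_ ev _] := gp j; apply: (stayV ev (HH j)).
by apply: Phit0 => j; apply: st => //; apply: leqW.
Qed.

Definition sigmaO (p : pprof) : profile := fun j h =>
  if last (c_src A n) h j == p j (size h).-1 then p j (size h) else nx (last (c_src A n) h j).

Lemma NE_exists : exists sigma, NashEq R sigma.
Proof.
pose p0 : pprof := fun j t => iter t nx (src A).
have g0 : good p0.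
  move=> j; split => //; first by move=> t; rewrite /p0 iterS; exact: nx_edge.
  exists #|V|; have := @nx_reach (pcfg p0) j.
  by rewrite /pcfg ffunE; apply => t; rewrite !ffunE /p0 iterS.
have H0 : forall j, p0 j #|V| = tgt.
  move=> j; have := @nx_reach (pcfg p0) j.
  by rewrite /pcfg ffunE; apply => t; rewrite !ffunE /p0 iterS.
pose P m := `[< exists p H, [/\ good p, forall j, p j H = tgt & PhiH p H = m] >].
have exP : exists m, P m by exists (PhiH p0 #|V|); apply/asboolP; exists p0, #|V|.
case: (ex_minnP exP) => m /asboolP [p [H [gp HH HPhi]]] Hmin.
pose sigma := sigmaO p.
have vs : valid_profile sigma.
  move=> j x h; rewrite /sigma /sigmaO /=; case: ifP => [/eqP E|_]; last exact: nx_edge.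
  by rewrite -[last x h]/(last (c_src A n) (x :: h)) E /=; have [_ ev _] := gp j; apply: ev.
have Hpl : forall t, play sigma (c_src A n) t = pcfg p t.
  elim=> [|t IH]; first by apply/ffunP => j; rewrite /play /= !ffunE; have [-> _ _] := gp j.
  apply/ffunP => j; rewrite play_S !ffunE /sigma /sigmaO last_hist IH hist_size /= ffunE eqxx.
  by [].
exists sigma; split => // i s vsi.
set rho' := play (upd sigma i s) (c_src A n).
have Hv' : ivalid rho' i by apply: run_valid; rewrite /upd eqxx.
have Ho : forall t j, j != i -> rho' t j = p j t.
  elim=> [|t IH] j ji; first by rewrite /rho' /play /= ffunE; have [-> _ _] := gp j.
  rewrite /rho' play_S ffunE /upd (negbTE ji) /sigma /sigmaO last_hist -/rho' IH //.
  by rewrite hist_size /= eqxx.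
case: (pselect (exists K, rho' K i == tgt)) => [[K /eqP HK]|nK]; last first.
  rewrite [X in (_ <= X)%E]cost_costR costR_oo ?leey //.
  by move=> K; apply/negP => HK; apply: nK; exists K.
pose p' : pprof := fun j => if j == i then (fun t => rho' t i) else p j.
have Hp' : forall t, pcfg p' t = rho' t.
  move=> t; apply/ffunP => j; rewrite ffunE /p'; case: (eqVneq j i) => [->//|ji].
  by rewrite Ho.
pose H' := maxn H K.
have HpH' : forall j, p j H' = tgt.
  by move=> j; have [_ ev _] := gp j; apply: (stayV ev (HH j)); rewrite leq_maxl.
have gp' : good p'.
  move=> j; rewrite /p'; case: (eqVneq j i) => [_|ji] /=; last exact: gp j.
  split; first by rewrite /rho' /play /= ffunE.
    exact: Hv'.
  by exists K.
have Hp'H' : forall j, p' j H' = tgt.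
  move=> j; rewrite /p'; case: (eqVneq j i) => [_|ji] /=; last exact: HpH'.
  by apply: (tgt_stay Hv' HK); rewrite leq_maxr.
have Hle : (PhiH p H' <= PhiH p' H')%N.
  rewrite (PhiH_hor gp HH (leq_maxl H K)) HPhi; apply: Hmin.
  by apply/asboolP; exists p', H'.
have Hagr : forall j, j != i -> p j = p' j by move=> j ji; rewrite /p' (negbTE ji).
have X := @PhiH_dev p p' i H' Hagr.
have Hc : (costH p i H' <= costH p' i H')%N by lia.
rewrite !cost_costR.
have Epl : play sigma (c_src A n) = pcfg p by apply: funext.
have Epl' : rho' = pcfg p' by apply: funext => t; rewrite Hp'.
rewrite Epl -/rho' Epl'.
have ivp : forall (q : pprof), good q -> ivalid (pcfg q) i.
  by move=> q gq t; rewrite !ffunE; have [_ ev _] := gq i; apply: ev.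
rewrite (costR_eqn (ivp _ gp) (K := H')) ?ffunE ?HpH' //.
rewrite (costR_eqn (ivp _ gp') (K := H')) ?ffunE ?Hp'H' //.
by rewrite lee_fin ler_nat.
Qed.

Lemma main_sec (gamma : 'I_n -> R) :
  exists (p : R) (sigma : profile),
    [/\ exists b, gpath gamma (c_src A n, fun _ => +oo%E) (c_tgt A n, b) p,
        forall b q, gpath gamma (c_src A n, fun _ => +oo%E) (c_tgt A n, b) q -> p <= q,
        minimal_NE gamma sigma &
        p%:E = social_cost gamma sigma].
Proof.
pose F := {ffun 'I_n -> 'I_(Ybound A n).+1}.
have NEb : forall sigma, NashEq R sigma -> exists f : F,
    forall i, cost R i sigma (c_src A n) = (((f i : nat))%:R)%:E.
  move=> sigma Hs; have [t [Ht _]] := NE_path gamma Hs.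
  have tb : forall i, (t i < (Ybound A n).+1)%N.
    move=> i; have [m [Hm Hmb]] := cost_nxs sigma (c_src A n) i.
    have := (proj2 Hs) i (nxs i) (nxs_valid i); rewrite Ht Hm lee_fin ler_nat => tm.
    by rewrite ltnS (leq_trans tm Hmb).
  by exists [ffun i => Ordinal (tb i)] => i; rewrite ffunE.
pose P (f : F) := `[< exists sigma, NashEq R sigma /\
    forall i, cost R i sigma (c_src A n) = (((f i : nat))%:R)%:E >].
pose G (f : F) := \sum_(i < n) gamma i * ((f i : nat))%:R.
have [sigma0 H0] := NE_exists.
have [f0 Hf0] := NEb _ H0.
have P0 : P f0 by apply/asboolP; exists sigma0.
case: (arg_minP G P0) => f /asboolP [sigma [Hs Hc]] Hmin.
have SC : forall sigma' (f' : F),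
    (forall i, cost R i sigma' (c_src A n) = (((f' i : nat))%:R)%:E) ->
    social_cost gamma sigma' = (G f')%:E.
  move=> s' f' Hf'; rewrite /social_cost.
  by under eq_bigr do rewrite Hf' -EFinM; rewrite sumEFin.
exists (G f), sigma; split.
- have [t [Ht [b Hb]]] := NE_path gamma Hs; exists b.
  suff -> : G f = \sum_(i < n) gamma i * (t i)%:R by [].
  apply: eq_bigr => i _; congr (_ * _).
  by have := Ht i; rewrite Hc => -[] /eqP; rewrite eqr_nat => /eqP ->.
- move=> b q Hq; have [s' [Hs' Hsc]] := path_NE Hq.
  have [f' Hf'] := NEb _ Hs'.
  rewrite (SC _ _ Hf') in Hsc; case: Hsc => <-.
  by apply: Hmin; apply/asboolP; exists s'.
- split => // s' Hs'; have [f' Hf'] := NEb _ Hs'.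
  rewrite (SC _ _ Hc) (SC _ _ Hf') lee_fin; apply: Hmin.
  by apply/asboolP; exists s'.
- by rewrite (SC _ _ Hc).
Qed.

End Proofs.

Theorem mainTheorem6 (R : realType) (A : arena) (n : nat) (gamma : 'I_n -> R) :
  exists (p : R) (sigma : profile A n),
    [/\ exists b, gpath gamma (c_src A n, fun _ => +oo%E) (c_tgt A n, b) p,
        forall b q, gpath gamma (c_src A n, fun _ => +oo%E) (c_tgt A n, b) q -> p <= q,
        minimal_NE gamma sigma &
        p%:E = social_cost gamma sigma].
Proof. exact: main_sec. Qed.
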